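(* Let $C$ be a TDD respecting a vtree $T$, and let $h,h'$ be two twin $t_1$-nodes of $C$ for some non-root node $t_1$ of $T$. Then the circuit obtained from $C$ by contracting $h$ and $h'$ is again a TDD respecting $T$ and computes the same Boolean function as $C$.
   Context: A vtree over $X$ is a rooted tree whose internal nodes have exactly two ordered children and whose leaves are labeled bijectively by $X$; $X_t$ is the set of variables below node $t$. An nTDD $C=(N,E)$ respecting $T$ has nodes $N=\biguplus_t N_t$ ($t$-nodes); leaf $t$-nodes (leaf labeled $x$) carry a label in $\{x,\neg x,1,0\}$ and compute that literal/constant; an internal $t$-node $g$ with children $t_1,t_2$ has inputs $E(g)\subseteq N_{t_1}\times N_{t_2}$ and computes $f_g=\bigvee_{(g_1,g_2)\in E(g)}(f_{g_1}\wedge f_{g_2})$ over $X_t$ (false if $E(g)=\emptyset$); the distinguished root-node $\mathrm{out}$ gives $f_C=f_{\mathrm{out}}$. A TDD is an nTDD such that for every leaf $t$ labeled $x$, $N_t$ has at most one node labeled $x$, at most one labeled $\neg x$, at most one labeled $1$, and if one is labeled $1$ all others are labeled $0$; and for every internal $t$, distinct $t$-nodes have disjoint input sets. Twins: let $t_1$ be a non-root node of $T$ with parent $t$ and sibling $t_2$. For a $t_1$-node $h$ and a $t$-node $g$, $\mathrm{sib}_g(h)$ is the set of $t_2$-nodes $h_2$ such that the pair formed by $h$ and $h_2$ (in the order of the children of $t$) belongs to $E(g)$. Distinct $t_1$-nodes $h,h'$ are twins if $\mathrm{sib}_g(h)=\mathrm{sib}_g(h')$ for every $t$-node $g$. Contracting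 twins $h,h'$: replace them by a new $t_1$-node $v$ with $E(v)=E(h)\cup E(h')$ (so that $f_v=f_h\vee f_{h'}$); for every $t$-node $g$, replace each pair in $E(g)$ containing $h$ by the same pair with $v$ in place of $h$, and remove each pair containing $h'$. *)

(* Defs.v *)
From HB Require Import structures.
From mathcomp Require Import all_boot.
Set Implicit Arguments. Unset Strict Implicit. Unset Printing Implicit Defensive.

Inductive vtree (X : Type) : Type :=
| VLeaf of X
| VNode of vtree X & vtree X.
Arguments VLeaf {X} _.
Arguments VNode {X} _ _.

Fixpoint leaves (X : Type) (t : vtree X) : seq X :=
  match t with VLeaf x => [:: x] | VNode l r => leaves l ++ leaves r end.

Definition is_vtree (X : finType) (t : vtree X) : Prop :=
  uniq (leaves t) /\ forall x : X, x \in leaves t.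

(* Nodes of a vtree are addressed by paths from the root
   (false = left child, true = right child). The children of the node
   at address p are at addresses rcons p false and rcons p true. *)
Fixpoint subtree (X : Type) (t : vtree X) (p : seq bool) : option (vtree X) :=
  match p with
  | [::] => Some t
  | b :: p' => match t with
               | VLeaf _ => None
               | VNode l r => subtree (if b then r else l) p'
               end
  end.

(* Leaf labels: x, ~x, 1, 0 (x is the variable labelling the vtree leaf). *)
Inductive lit := LPos | LNeg | LOne | LZero.

Definition lit_eqb (a b : lit) : bool :=
  match a, b with
  | LPos, LPos | LNeg, LNeg | LOne, LOne | LZero, LZero => true
  | _, _ => false end.
Lemma lit_eqP : Equality.axiom lit_eqb.
Proof. by case; case; constructor. Qed.
HB.instance Definition _ := hasDecEq.Build lit lit_eqP.

(* A circuit with nodes drawn from an ambient finite type V.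
   nodes : the node set N; pos g : the vtree node t with g in N_t;
   lab g : the label of g (meaningful for leaf t-nodes);
   edges g : the input set E(g) (meaningful for internal t-nodes);
   out : the distinguished output node. *)
Record circuit (V : finType) := Circuit {
  nodes : {set V};
  pos : V -> seq bool;
  lab : V -> lit;
  edges : V -> {set V * V};
  out : V }.

Section Circ.
Variables (X V : finType).
Implicit Types (T : vtree X) (C : circuit V).

(* f_g, where t is the subtree of T rooted at the vtree node of g *)
Fixpoint evalv C (t : vtree X) (g : V) (a : X -> bool) : bool :=
  match t with
  | VLeaf x => match lab C g with
               | LPos => a x | LNeg => ~~ a x | LOne => true | LZero => false end
  | VNode l r => [exists e in edges C g, evalv C l e.1 a && evalv C r e.2 a]
  end.

Definition fC T C (a : X -> bool) : bool := evalv C T (out C) a.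

Definition is_nTDD T C : Prop :=
  [/\ out C \in nodes C, pos C (out C) = [::],
      (forall g, g \in nodes C -> subtree T (pos C g) <> None) &
      (forall g l r, g \in nodes C -> subtree T (pos C g) = Some (VNode l r) ->
         forall e, e \in edges C g ->
           [/\ e.1 \in nodes C, e.2 \in nodes C,
               pos C e.1 = rcons (pos C g) false & pos C e.2 = rcons (pos C g) true])].

Definition is_TDD T C : Prop :=
  [/\ is_nTDD T C,
      (forall g g' x, g \in nodes C -> g' \in nodes C ->
         subtree T (pos C g) = Some (VLeaf x) -> pos C g' = pos C g ->
         lab C g = lab C g' -> lab C g != LZero -> g = g'),
      (forall g g' x, g \in nodes C -> g' \in nodes C ->
         subtree T (pos C g) = Some (VLeaf x) -> pos C g' = pos C g ->
         lab C g = LOne -> g != g' -> lab C g' = LZero) &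
      (forall g g' l r, g \in nodes C -> g' \in nodes C ->
         subtree T (pos C g) = Some (VNode l r) -> pos C g' = pos C g ->
         g != g' -> [disjoint edges C g & edges C g'])].

(* The pair formed by h (a child of t on side b) and h2 (on side ~~ b),
   in the order of the children of t. *)
Definition opair (b : bool) (h h2 : V) : V * V := if b then (h2, h) else (h, h2).

(* sib_g(h) for t1 = rcons p b, t = p, t2 = rcons p (~~ b) *)
Definition sib C (p : seq bool) (b : bool) (g h : V) : {set V} :=
  [set h2 | [&& h2 \in nodes C, pos C h2 == rcons p (~~ b) & opair b h h2 \in edges C g]].

Definition twins C (p : seq bool) (b : bool) (h h' : V) : Prop :=
  [/\ h \in nodes C, h' \in nodes C, pos C h = rcons p b /\ pos C h' = rcons p b,
      h != h' &
      forall g, g \in nodes C -> pos C g = p -> sib C p b g h = sib C p b g h'].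

(* Label of the merged node when t1 is a leaf: the literal computing the
   disjunction of the two literals. *)
Definition or_lit (a b : lit) : lit :=
  match a, b with
  | LOne, _ | _, LOne => LOne
  | LPos, LNeg | LNeg, LPos => LOne
  | LZero, c => c
  | c, LZero => c
  | LPos, LPos => LPos
  | LNeg, LNeg => LNeg
  end.

(* Contracting twins h, h' (t-nodes' parent address p): the new node v
   reuses the name h; h' is deleted. *)
Definition contract C (p : seq bool) (h h' : V) : circuit V :=
  {| nodes := nodes C :\ h';
     pos := pos C;
     lab := fun x => if x == h then or_lit (lab C h) (lab C h') else lab C x;
     edges := fun x =>
       if x == h then edges C h :|: edges C h'
       else if pos C x == p then
         [set e in edges C x | (e.1 != h') && (e.2 != h')]
       else edges C x;
     out := out C |}.

End Circ.

(* Main.v *)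
Require Import Defs.
From mathcomp Require Import all_boot.

Lemma rcons_eq (q s : seq bool) c d : rcons q c = rcons s d -> q = s.
Proof. by move/rcons_inj => [->]. Qed.

Lemma rcons2_neq (q : seq bool) c d : rcons (rcons q c) d = q -> False.
Proof. move/(congr1 size); rewrite !size_rcons => /eqP. by rewrite -addn2 -{2}(addn0 (size q)) eqn_add2l. Qed.

Lemma rcons1_neq (q : seq bool) c : rcons q c = q -> False.
Proof. move/(congr1 size); rewrite !size_rcons => /eqP. by rewrite -addn1 -{2}(addn0 (size q)) eqn_add2l. Qed.

Lemma rcons_nil' (q : seq bool) c : rcons q c = [::] -> False.
Proof. by case: q. Qed.

Lemma subtree_rcons (X : Type) (T : vtree X) q c t : subtree T q = Some t ->
  subtree T (rcons q c) = match t with VLeaf _ => None | VNode l r => Some (if c then r else l) end.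
Proof.
elim: q T => [|d q IH] [x|l r] /=.
- by move=> [E]; subst t.
- by move=> [E]; subst t; case: c; [case: r | case: l].
- by [].
- exact: IH.
Qed.


Lemma litcases (a a' c : lit) : (a = c -> c = LZero) -> (a' = c -> c = LZero) ->
  (c = LOne -> a = LZero) -> (c = LOne -> a' = LZero) -> (a = LOne -> c = LZero) ->
  (a' = LOne -> c = LZero) -> (a = a' -> a = LZero) ->
  [/\ (or_lit a a' = c -> c = LZero), (or_lit a a' = LOne -> c = LZero) &
      (c = LOne -> or_lit a a' = LZero)].
Proof.
case: a; case: a'; case: c => F1 F2 F3 F4 F5 F6 F7; split => //=;
  try (by have := F1 erefl); try (by have := F2 erefl); try (by have := F3 erefl);
  try (by have := F4 erefl); try (by have := F5 erefl); try (by have := F6 erefl);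
  try (by have := F7 erefl).
Qed.

Lemma lit_or_eval (a a' : lit) (v : bool) :
  (match or_lit a a' with LPos => v | LNeg => ~~ v | LOne => true | LZero => false end) =
  (match a with LPos => v | LNeg => ~~ v | LOne => true | LZero => false end) ||
  (match a' with LPos => v | LNeg => ~~ v | LOne => true | LZero => false end).
Proof. by case: a; case: a'; case: v. Qed.

Lemma disjI (T : finType) (A B : {set T}) :
  (forall x, x \in A -> x \in B -> False) -> [disjoint A & B].
Proof. move=> H; apply/pred0P => x /=; apply/negbTE/negP => /andP[]; exact: H. Qed.

Lemma subtree_nil (X : Type) (T : vtree X) : subtree T [::] = Some T.
Proof. by case: T. Qed.

Theorem lemma5 (X V : finType) (T : vtree X) (C : circuit V)
    (p : seq bool) (b : bool) (h h' : V) :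
  is_vtree T ->
  is_TDD T C ->
  subtree T (rcons p b) <> None ->
  twins C p b h h' ->
  is_TDD T (contract C p h h') /\
  (forall a : X -> bool, fC T (contract C p h h') a = fC T C a).
Proof.
move=> _ [[outN outpos posOK edgeOK] lab1 lab2 disj] _ [hN h'N [ph ph'] hh' tw].
have outh' : out C != h'.
  by apply/eqP => E; move: outpos; rewrite E ph'; exact: rcons_nil'.
have outh : out C != h.
  by apply/eqP => E; move: outpos; rewrite E ph; exact: rcons_nil'.
have chne : forall g e c, pos C g <> p -> pos C e = rcons (pos C g) c -> (e != h) && (e != h').
  move=> g e c gp pe; apply/andP; split; apply/eqP => E; subst e;
   [move: pe; rewrite ph | move: pe; rewrite ph'] => /esym/rcons_eq; exact: gp.
have hp : pos C h <> p by rewrite ph; exact: rcons1_neq.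
have leaf_facts : forall g x, g \in nodes C -> g != h -> g != h' -> pos C g = pos C h ->
   subtree T (pos C h) = Some (VLeaf x) ->
   let a := lab C h in let a' := lab C h' in let c := lab C g in
   [/\ (or_lit a a' = c -> c = LZero), (or_lit a a' = LOne -> c = LZero) &
      (c = LOne -> or_lit a a' = LZero)].
  move=> g x gN gh gh' pg st a a' c; have st' : subtree T (pos C h') = Some (VLeaf x) by rewrite ph' -ph.
  have stg : subtree T (pos C g) = Some (VLeaf x) by rewrite pg.
  have pgh' : pos C g = pos C h' by rewrite pg ph ph'.
  have phh' : pos C h' = pos C h by rewrite ph ph'.
  apply: litcases.
  - move=> E; case: (c =P LZero) => // /eqP nz; case/eqP: gh; apply/esym.
    by apply: (lab1 h g x hN gN st pg E); move: nz; rewrite -E.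
  - move=> E; case: (c =P LZero) => // /eqP nz; case/eqP: gh'; apply/esym.
    by apply: (lab1 h' g x h'N gN st' pgh' E); move: nz; rewrite -E.
  - move=> E; apply: (lab2 g h x gN hN stg (esym pg) E); by rewrite // eq_sym.
  - move=> E; apply: (lab2 g h' x gN h'N stg (esym pgh') E); by rewrite // eq_sym.
  - move=> E; apply: (lab2 h g x hN gN st pg E); by rewrite // eq_sym.
  - move=> E; apply: (lab2 h' g x h'N gN st' pgh' E); by rewrite // eq_sym.
  - move=> E; case: (a =P LZero) => // /eqP nz; case/eqP: hh'.
    exact: (lab1 h h' x hN h'N st phh' E nz).
split.
  split.
  - split => /=.
    + by rewrite !inE outh' outN.
    + by [].
    + by move=> g; rewrite inE => /andP[_ gN]; apply: posOK.
    + move=> g l r; rewrite inE => /andP[gh' gN] st e.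
      case: (g =P h) => [Egh|ngh].
      * subst g; rewrite inE => /orP[] eE.
        - have [n1 n2 p1 p2] := edgeOK _ _ _ hN st _ eE.
          rewrite !inE n1 n2 p1 p2 !andbT; split => //; apply/eqP => E;
            [move: p1 | move: p2]; rewrite E ph' ph  => /esym; exact: rcons1_neq.
        - have st' : subtree T (pos C h') = Some (VNode l r) by rewrite ph' -ph.
          have [n1 n2 p1 p2] := edgeOK _ _ _ h'N st' _ eE.
          rewrite !inE n1 n2 p1 p2 ph' -ph !andbT; split => //; apply/eqP => E;
            [move: p1 | move: p2]; rewrite E ph' => /esym; exact: rcons1_neq.
      * case: ifP => [/eqP gp | /eqP gp].
        - rewrite inE => /andP[eE /andP[n1 n2]].
          have [m1 m2 p1 p2] := edgeOK _ _ _ gN st _ eE.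
          by rewrite !inE n1 n2 m1 m2.
        - move=> eE; have [m1 m2 p1 p2] := edgeOK _ _ _ gN st _ eE.
          have /andP[_ n1] := chne _ _ _ gp p1; have /andP[_ n2] := chne _ _ _ gp p2.
          by rewrite !inE n1 n2 m1 m2.
  - move=> g g' x /=; rewrite !inE => /andP[gh' gN] /andP[g'h' g'N] st pe.
    case: (g =P h) => [Eg|ng]; case: (g' =P h) => [Eg'|ng'].
    + by subst.
    + subst g => E nz; have ng'0 : g' != h by apply/eqP.
      have [F1 _ _] := leaf_facts g' x g'N ng'0 g'h' pe st.
      by move: nz; rewrite E (F1 E).
    + subst g' => E nz; have ng0 : g != h by apply/eqP.
      have st' : subtree T (pos C h) = Some (VLeaf x) by rewrite pe.
      have [F1 _ _] := leaf_facts g x gN ng0 gh' (esym pe) st'.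
      by move: nz; rewrite (F1 (esym E)).
    + exact: (lab1 g g' x gN g'N st pe).
  - move=> g g' x /=; rewrite !inE => /andP[gh' gN] /andP[g'h' g'N] st pe.
    case: (g =P h) => [Eg|ng]; case: (g' =P h) => [Eg'|ng'].
    + by subst; rewrite eqxx.
    + subst g => E _; have ng'0 : g' != h by apply/eqP.
      have [_ F2 _] := leaf_facts g' x g'N ng'0 g'h' pe st.
      exact: F2 E.
    + subst g' => E _; have ng0 : g != h by apply/eqP.
      have st' : subtree T (pos C h) = Some (VLeaf x) by rewrite pe.
      have [_ _ F3] := leaf_facts g x gN ng0 gh' (esym pe) st'.
      exact: F3 E.
    + exact: (lab2 g g' x gN g'N st pe).
  - move=> g g' l r /=; rewrite !inE => /andP[gh' gN] /andP[g'h' g'N] st pe gg'.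
    case: (g =P h) => [Eg|ng]; case: (g' =P h) => [Eg'|ng'].
    + by subst; rewrite eqxx in gg'.
    + subst g; have -> : (pos C g' == p) = false by rewrite pe; apply/eqP.
      have st' : subtree T (pos C h') = Some (VNode l r) by rewrite ph' -ph.
      apply: disjI => e; rewrite inE => /orP[] e1 e2.
      * by rewrite (disjointFr (disj h g' l r hN g'N st pe gg') e1) in e2.
      * have D := disj h' g' l r h'N g'N st' (etrans pe (etrans ph (esym ph'))) ltac:(by rewrite eq_sym).
        by rewrite (disjointFr D e1) in e2.
    + subst g'; have -> : (pos C g == p) = false by rewrite -pe; apply/eqP.
      have st' : subtree T (pos C h) = Some (VNode l r) by rewrite pe.
      have st'' : subtree T (pos C h') = Some (VNode l r) by rewrite ph' -ph pe.
      apply: disjI => e e2; rewrite inE => /orP[] e1.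
      * by rewrite (disjointFr (disj h g l r hN gN st' (esym pe) ltac:(by rewrite eq_sym)) e1) in e2.
      * have D := disj h' g l r h'N gN st'' (etrans (esym pe) (etrans ph (esym ph'))) ltac:(by rewrite eq_sym).
        by rewrite (disjointFr D e1) in e2.
    + have D := disj g g' l r gN g'N st pe gg'.
      rewrite pe; case: ifP => _ //.
      apply: disjI => e; rewrite !inE => /andP[e1 _] /andP[e2 _].
      by rewrite (disjointFr D e1) in e2.
move=> a.
set C' := contract C p h h'.
have hp' : pos C h' <> p by rewrite ph' -ph.
have key : forall t q, subtree T q = Some t -> forall g, g \in nodes C :\ h' -> pos C g = q ->
  evalv C' t g a = if g == h then evalv C t h a || evalv C t h' a else evalv C t g a.
  elim => [x|l IHl r IHr] q st g; rewrite inE => /andP[gh' gN] pg /=.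
  - case: eqP => [Eg|ng] //; subst g; exact: lit_or_eval.
  have stl : subtree T (rcons q false) = Some l by rewrite (subtree_rcons _ _ _ false _ st).
  have str : subtree T (rcons q true) = Some r by rewrite (subtree_rcons _ _ _ true _ st).
  have IHe : forall g0 e, g0 \in nodes C -> pos C g0 = q -> e \in edges C g0 -> e.1 != h' -> e.2 != h' ->
      evalv C' l e.1 a = (if e.1 == h then evalv C l h a || evalv C l h' a else evalv C l e.1 a) /\
      evalv C' r e.2 a = (if e.2 == h then evalv C r h a || evalv C r h' a else evalv C r e.2 a).
    move=> g0 e g0N pg0 eE n1 n2.
    have st0 : subtree T (pos C g0) = Some (VNode l r) by rewrite pg0.
    have [m1 m2 p1 p2] := edgeOK _ _ _ g0N st0 _ eE.
    split; [apply: (IHl (rcons q false) stl e.1) | apply: (IHr (rcons q true) str e.2)].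
    + by rewrite !inE n1 m1.
    + by rewrite p1 pg0.
    + by rewrite !inE n2 m2.
    + by rewrite p2 pg0.
  case: (g =P h) => [Eg|ng].
  - subst g.
    have ev : forall e, e \in edges C h :|: edges C h' ->
        evalv C' l e.1 a && evalv C' r e.2 a = evalv C l e.1 a && evalv C r e.2 a.
      move=> e; rewrite inE => /orP[] eE.
      + have st0 : subtree T (pos C h) = Some (VNode l r) by rewrite pg.
        have [_ _ p1 p2] := edgeOK _ _ _ hN st0 _ eE.
        have /andP[a1 b1] := chne _ _ _ hp p1; have /andP[a2 b2] := chne _ _ _ hp p2.
        have [-> ->] := IHe h e hN pg eE b1 b2.
        by rewrite (negbTE a1) (negbTE a2).
      + have pg' : pos C h' = q by rewrite ph' -ph.
        have st0 : subtree T (pos C h') = Some (VNode l r) by rewrite pg'.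
        have [_ _ p1 p2] := edgeOK _ _ _ h'N st0 _ eE.
        have /andP[a1 b1] := chne _ _ _ hp' p1; have /andP[a2 b2] := chne _ _ _ hp' p2.
        have [-> ->] := IHe h' e h'N pg' eE b1 b2.
        by rewrite (negbTE a1) (negbTE a2).
    transitivity [exists e in edges C h :|: edges C h', evalv C l e.1 a && evalv C r e.2 a].
      apply: eq_existsb => e; apply: andb_id2l => eE; exact: ev.
    apply/existsP/orP => [[e /andP[]]|[] /existsP[e /andP[eE v]]].
    + rewrite inE => /orP[] eE v; [left|right]; apply/existsP; exists e; by rewrite eE.
    + by exists e; rewrite inE eE v.
    + by exists e; rewrite inE eE v orbT.
  have ngb : (g == h) = false by apply/eqP.

  have st0 : subtree T (pos C g) = Some (VNode l r) by rewrite pg.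
  case: ifP => [/eqP gp|/eqP gp]; last first.
    apply: eq_existsb => e; apply: andb_id2l => eE.
    have [_ _ p1 p2] := edgeOK _ _ _ gN st0 _ eE.
    have /andP[a1 b1] := chne _ _ _ gp p1; have /andP[a2 b2] := chne _ _ _ gp p2.
    have [-> ->] := IHe g e gN pg eE b1 b2.
    by rewrite (negbTE a1) (negbTE a2).
  have twE : forall h2, h2 \in nodes C -> pos C h2 = rcons p (~~ b) ->
      (opair b h h2 \in edges C g) = (opair b h' h2 \in edges C g).
    move=> h2 n2 p2; have : (h2 \in sib C p b g h) = (h2 \in sib C p b g h') by rewrite (tw g gN gp).
    by rewrite /sib !inE n2 p2 eqxx.
  have posne : forall e, e \in edges C g -> pos C (if b then e.1 else e.2) = rcons p (~~ b).
    move=> e eE; have [_ _ p1 p2] := edgeOK _ _ _ gN st0 _ eE.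
    by destruct b; rewrite /= ?p1 ?p2 gp.
  have oth : forall e, e \in edges C g -> ((if b then e.1 else e.2) == h) = false /\
                                          ((if b then e.1 else e.2) == h') = false.
    move=> e eE; have pe := posne e eE; split; apply/eqP => E; move: pe; rewrite E ?ph ?ph';
      move/rcons_inj/(congr1 snd) => /=; by destruct b.
  destruct b; simpl in twE, posne, oth.
  + apply/existsP/existsP => [[e /andP[eF v]] | [e /andP[eE v]]].
    * rewrite inE in eF; case/andP: eF => eE /andP[n1 n2].
      have [E1 E2] := IHe g e gN pg eE n1 n2; rewrite E1 E2 in v.
      have [oh _] := oth e eE; rewrite oh in v.
      case: (e.2 =P h) v => [E2h | ne2] v.
      - case/andP: v => v1 /orP[vh|vh'].
        + by exists e; rewrite eE v1 E2h vh.
        + exists (e.1, h'); rewrite /= v1 vh' andbT.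
          have [m1 _ _ _] := edgeOK _ _ _ gN st0 _ eE.
          by rewrite -(twE e.1 m1 (posne e eE)) -E2h -surjective_pairing eE.
      - by exists e; rewrite eE.
    * have [m1 m2 _ _] := edgeOK _ _ _ gN st0 _ eE.
      have [oh oh'] := oth e eE.
      case: (e.2 =P h') => [E2h' | ne2].
      - have hE : (e.1, h) \in edges C g.
          by rewrite (twE e.1 m1 (posne e eE)) -E2h' -surjective_pairing.
        have [E1 E2] := IHe g (e.1, h) gN pg hE (negbT oh') hh'.
        exists (e.1, h); rewrite inE hE /= oh' hh' E1 E2 /= eqxx oh.
        case/andP: v => v1 v2; by rewrite v1 -E2h' v2 orbT.
      - have n2 : e.2 != h' by apply/eqP.
        have [E1 E2] := IHe g e gN pg eE (negbT oh') n2.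
        exists e; rewrite inE eE (negbT oh') n2 E1 E2 oh /=.
        case/andP: v => v1 v2; rewrite v1 /=.
        case: (e.2 =P h) => [E2h|_]; [by rewrite -E2h v2 | by rewrite v2].
  + apply/existsP/existsP => [[e /andP[eF v]] | [e /andP[eE v]]].
    * rewrite inE in eF; case/andP: eF => eE /andP[n1 n2].
      have [E1 E2] := IHe g e gN pg eE n1 n2; rewrite E1 E2 in v.
      have [oh _] := oth e eE; rewrite oh in v.
      case: (e.1 =P h) v => [E1h | ne1] v.
      - case/andP: v => /orP[vh|vh'] v2.
        + by exists e; rewrite eE v2 E1h vh.
        + exists (h', e.2); rewrite /= v2 vh' andbT.
          have [_ m2 _ _] := edgeOK _ _ _ gN st0 _ eE.
          by rewrite -(twE e.2 m2 (posne e eE)) -E1h -surjective_pairing eE.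
      - by exists e; rewrite eE.
    * have [m1 m2 _ _] := edgeOK _ _ _ gN st0 _ eE.
      have [oh oh'] := oth e eE.
      case: (e.1 =P h') => [E1h' | ne1].
      - have hE : (h, e.2) \in edges C g.
          by rewrite (twE e.2 m2 (posne e eE)) -E1h' -surjective_pairing.
        have [E1 E2] := IHe g (h, e.2) gN pg hE hh' (negbT oh').
        exists (h, e.2); rewrite inE hE /= oh' hh' E1 E2 /= eqxx oh.
        case/andP: v => v1 v2; by rewrite v2 -E1h' v1 orbT.
      - have n1 : e.1 != h' by apply/eqP.
        have [E1 E2] := IHe g e gN pg eE n1 (negbT oh').
        exists e; rewrite inE eE (negbT oh') n1 E1 E2 oh /=.
        case/andP: v => v1 v2; rewrite v2 andbT.
        case: (e.1 =P h) => [E1h|_]; [by rewrite -E1h v1 | by rewrite v1].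
have oN : out C \in nodes C :\ h' by rewrite !inE outh' outN.
have := key T [::] (subtree_nil _ T) (out C) oN outpos; rewrite (negbTE outh) => E.
exact: E.
Qed.
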